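(* There is an isomorphism of functors $Mag\cong As\circ MagFine$ from vector spaces to vector spaces; that is, for every vector space $V$ over a field $\mathbb K$ there is an isomorphism $Mag(V)\cong T(MagFine(V))$, natural in $V$, where $T$ denotes the tensor algebra functor.
   Context: $Mag(V)=\bigoplus_{n\ge0}\mathbb K[Y_{n-1}]\otimes V^{\otimes n}$ is the free unital magmatic algebra on $V$, $Y_{n-1}$ being the set of planar binary rooted trees with $n$ leaves. $MagFine(V)=\bigoplus_{n\ge1}MagFine_n\otimes V^{\otimes n}$ is the free $MagFine$-algebra on $V$, where a $MagFine$-algebra is a vector space with multilinear operations $m^n_i$ of arity $n$ for $n\ge3$, $1\le i\le n-2$, satisfying no relations, and $MagFine_n$ is the space of $n$-ary operations of the corresponding free nonsymmetric operad. $T(W)=\bigoplus_{n\ge0}W^{\otimes n}$. *)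

(* Defs.v *)
From HB Require Import structures.
From mathcomp Require Import all_boot all_order all_algebra.
Set Implicit Arguments. Unset Strict Implicit. Unset Printing Implicit Defensive.
Import GRing.Theory.
Local Open Scope ring_scope.

Section Defs.
Variable K : fieldType.

Definition is_linear (U W : lmodType K) (f : U -> W) : Prop :=
  forall (a : K) (x y : U), f (a *: x + y) = a *: f x + f y.

Record magAlg := MagAlg {
  mag_car :> lmodType K;
  mag_mul : mag_car -> mag_car -> mag_car;
  mag_one : mag_car;
  mag_mulDl : forall (a : K) (x y z : mag_car),
      mag_mul (a *: x + y) z = a *: mag_mul x z + mag_mul y z;
  mag_mulDr : forall (a : K) (x y z : mag_car),
      mag_mul z (a *: x + y) = a *: mag_mul z x + mag_mul z y;
  mag_mul1l : forall x, mag_mul mag_one x = x;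
  mag_mul1r : forall x, mag_mul x mag_one = x
}.

Definition mag_hom (A B : magAlg) (g : A -> B) : Prop :=
  [/\ is_linear g,
      forall x y, g (mag_mul x y) = mag_mul (g x) (g y)
    & g (mag_one A) = mag_one B].

Definition is_free_mag (V : lmodType K) (A : magAlg) (iota : V -> A) : Prop :=
  is_linear iota /\
  forall (B : magAlg) (f : V -> B), is_linear f ->
    (exists g : A -> B, mag_hom g /\ forall v, g (iota v) = f v) /\
    (forall g g' : A -> B, mag_hom g -> mag_hom g' ->
       (forall v, g (iota v) = g' (iota v)) -> forall x, g x = g' x).

Definition multilinear (A : lmodType K) (n : nat) (op : ('I_n -> A) -> A)
  : Prop :=
  forall (j : 'I_n) (x : 'I_n -> A) (a : K) (u w : A),
    op (fun k => if k == j then a *: u + w else x k)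
    = a *: op (fun k => if k == j then u else x k)
      + op (fun k => if k == j then w else x k).

(* MagFine-algebra: multilinear operations m^N_i for N >= 3, 1 <= i <= N-2,
   no relations.  We encode N = n+3 and i = j+1 with j : 'I_(n+1). *)
Record magFineAlg := MagFineAlg {
  mf_car :> lmodType K;
  mf_op : forall (n : nat) (j : 'I_n.+1), ('I_n.+3 -> mf_car) -> mf_car;
  mf_op_multilinear : forall (n : nat) (j : 'I_n.+1), multilinear (@mf_op n j)
}.

Definition mf_hom (A B : magFineAlg) (g : A -> B) : Prop :=
  is_linear g /\
  forall (n : nat) (j : 'I_n.+1) (x : 'I_n.+3 -> A),
    g (@mf_op A n j x) = @mf_op B n j (fun k => g (x k)).

Definition is_free_magfine (V : lmodType K) (A : magFineAlg) (iota : V -> A)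
  : Prop :=
  is_linear iota /\
  forall (B : magFineAlg) (f : V -> B), is_linear f ->
    (exists g : A -> B, mf_hom g /\ forall v, g (iota v) = f v) /\
    (forall g g' : A -> B, mf_hom g -> mf_hom g' ->
       (forall v, g (iota v) = g' (iota v)) -> forall x, g x = g' x).

Definition alg_hom (A B : algType K) (g : A -> B) : Prop :=
  [/\ is_linear g, forall x y, g (x * y) = g x * g y & g 1 = 1].

Definition is_tensor_alg (W : lmodType K) (T : algType K) (iota : W -> T)
  : Prop :=
  is_linear iota /\
  forall (B : algType K) (f : W -> B), is_linear f ->
    (exists g : T -> B, alg_hom g /\ forall w, g (iota w) = f w) /\
    (forall g g' : T -> B, alg_hom g -> alg_hom g' ->
       (forall w, g (iota w) = g' (iota w)) -> forall x, g x = g' x).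

End Defs.

(* Main.v *)
From HB Require Import structures.
From mathcomp Require Import all_boot all_order all_algebra.
From mathcomp Require Import boolp.
From mathcomp Require Import zify.
Require Import Defs.
Set Implicit Arguments. Unset Strict Implicit. Unset Printing Implicit Defensive.
Import GRing.Theory.
Local Open Scope ring_scope.
From Stdlib Require Import ProofIrrelevance FunctionalExtensionality.

Section Endo.
Variable K : fieldType.
Variable X : lmodType K.
Variable x0 : X.
Hypothesis x0_neq0 : x0 != 0.

Record endo := Endo { ef :> X -> X ; ef_lin : is_linear ef }.

Lemma endo_ext (f g : endo) : (forall x, f x = g x) -> f = g.
Proof.
case: f g => f fl [g gl] /= H.
have E : f = g by apply: functional_extensionality.
subst; f_equal; apply: proof_irrelevance.
Qed.

HB.instance Definition _ := gen_eqMixin endo.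
HB.instance Definition _ := gen_choiceMixin endo.

Lemma lin_add (f g : endo) : is_linear (fun x => f x + g x).
Proof. by move=> a x y; rewrite !ef_lin scalerDr addrACA. Qed.
Lemma lin_opp (f : endo) : is_linear (fun x => - f x).
Proof. by move=> a x y; rewrite ef_lin opprD scalerN. Qed.
Lemma lin_zero : is_linear (fun _ : X => (0 : X)).
Proof. by move=> a x y; rewrite scaler0 addr0. Qed.
Lemma lin_scale (a : K) (f : endo) : is_linear (fun x => a *: f x).
Proof. by move=> b x y; rewrite ef_lin scalerDr !scalerA mulrC. Qed.
Lemma lin_comp (f g : endo) : is_linear (fun x => f (g x)).
Proof. by move=> b x y; rewrite !ef_lin. Qed.
Lemma lin_id : is_linear (fun x : X => x).
Proof. by []. Qed.

Definition eadd f g := Endo (lin_add f g).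
Definition eopp f := Endo (lin_opp f).
Definition ezero := Endo lin_zero.
Definition escale a f := Endo (lin_scale a f).
Definition emul f g := Endo (lin_comp f g).
Definition eone := Endo lin_id.

Lemma eaddA : associative eadd.
Proof. by move=> f g h; apply: endo_ext => x /=; rewrite addrA. Qed.
Lemma eaddC : commutative eadd.
Proof. by move=> f g; apply: endo_ext => x /=; rewrite addrC. Qed.
Lemma eadd0 : left_id ezero eadd.
Proof. by move=> f; apply: endo_ext => x /=; rewrite add0r. Qed.
Lemma eaddN : left_inverse ezero eopp eadd.
Proof. by move=> f; apply: endo_ext => x /=; rewrite addNr. Qed.
HB.instance Definition _ := GRing.isZmodule.Build endo eaddA eaddC eadd0 eaddN.

Lemma escaleA a b v : escale a (escale b v) = escale (a * b) v.
Proof. by apply: endo_ext => x /=; rewrite scalerA. Qed.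
Lemma escale1 : left_id 1 escale.
Proof. by move=> f; apply: endo_ext => x /=; rewrite scale1r. Qed.
Lemma escaleDr : right_distributive escale +%R.
Proof. by move=> a f g; apply: endo_ext => x /=; rewrite scalerDr. Qed.
Lemma escaleDl v : {morph escale^~ v: a b / a + b}.
Proof. by move=> a b; apply: endo_ext => x /=; rewrite scalerDl. Qed.
HB.instance Definition _ := GRing.Zmodule_isLmodule.Build K endo escaleA escale1 escaleDr escaleDl.

Definition endoR (_ : x0 != 0) := endo.
HB.instance Definition _ := GRing.Lmodule.on (endoR x0_neq0).
Lemma emulA : associative emul.
Proof. by move=> f g h; apply: endo_ext. Qed.
Lemma emul1 : left_id eone emul.
Proof. by move=> f; apply: endo_ext. Qed.
Lemma emulr1 : right_id eone emul.
Proof. by move=> f; apply: endo_ext. Qed.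
Lemma ef_add f g x : (f + g : endo) x = f x + g x. Proof. by []. Qed.
Lemma ef_scale a f x : (a *: f : endo) x = a *: f x. Proof. by []. Qed.
Lemma ef_zero x : (0 : endo) x = 0. Proof. by []. Qed.
Lemma ef_D (f : endo) x y : f (x + y) = f x + f y.
Proof. by rewrite -[x in LHS]scale1r ef_lin scale1r. Qed.
Lemma ef_0 (f : endo) : f 0 = 0.
Proof. by apply: (@addrI _ (f 0)); rewrite -ef_D !addr0. Qed.
Lemma ef_Z (f : endo) a x : f (a *: x) = a *: f x.
Proof. by rewrite -[a *: x]addr0 ef_lin ef_0 addr0. Qed.
Lemma emulDl : left_distributive emul +%R.
Proof. by move=> f g h; apply: endo_ext. Qed.
Lemma emulDr : right_distributive emul +%R.
Proof. by move=> f g h; apply: endo_ext => x /=; rewrite ef_D. Qed.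
Lemma eone_neq0 : eone != 0.
Proof. apply/eqP => /(congr1 (fun f : endo => f x0)) /= E. by move: x0_neq0; rewrite E eqxx. Qed.
HB.instance Definition _ := GRing.Zmodule_isNzRing.Build (endoR x0_neq0) emulA emul1 emulr1 emulDl emulDr eone_neq0.
Lemma escaleAl (a : K) (u v : endoR x0_neq0) : a *: (u * v) = (a *: u) * v.
Proof. by apply: endo_ext. Qed.
HB.instance Definition _ := GRing.Lmodule_isLalgebra.Build K (endoR x0_neq0) escaleAl.
Lemma escaleAr (a : K) (u v : endoR x0_neq0) : a *: (u * v) = u * (a *: v).
Proof. by apply: endo_ext => x /=; rewrite ef_Z. Qed.
HB.instance Definition _ := GRing.Lalgebra_isAlgebra.Build K (endoR x0_neq0) escaleAr.
Lemma ef_mul (f g : endoR x0_neq0) x : (f * g) x = f (g x). Proof. by []. Qed.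
Lemma ef_one x : (1 : endoR x0_neq0) x = x. Proof. by []. Qed.
End Endo.


Section SubAlg.
Variable K : fieldType.
Variable A : algType K.
Variable R : A -> Prop.
Hypothesis R1 : R 1.
Hypothesis Rlin : forall a x y, R x -> R y -> R (a *: x + y).
Hypothesis Rmul : forall x y, R x -> R y -> R (x * y).

Record subr := Sub { sv :> A ; sP : R sv }.
Definition subT (_ : R 1) (_ : forall a x y, R x -> R y -> R (a *: x + y))
  (_ : forall x y, R x -> R y -> R (x * y)) := subr.
Local Notation sub := (subT R1 Rlin Rmul).
Lemma sub_ext (x y : sub) : sv x = sv y -> x = y.
Proof. case: x y => x xP [y yP] /= E; subst; f_equal; apply: proof_irrelevance. Qed.

HB.instance Definition _ := gen_eqMixin sub.
HB.instance Definition _ := gen_choiceMixin sub.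

Lemma R0 : R 0.
Proof. by have := Rlin (-1) R1 R1; rewrite scaleN1r addNr. Qed.
Lemma Radd x y : R x -> R y -> R (x + y).
Proof. by move=> Hx Hy; have := Rlin 1 Hx Hy; rewrite scale1r. Qed.
Lemma Ropp x : R x -> R (- x).
Proof. by move=> Hx; have := Rlin (-1) Hx R0; rewrite scaleN1r addr0. Qed.
Lemma Rscale a x : R x -> R (a *: x).
Proof. by move=> Hx; have := Rlin a Hx R0; rewrite addr0. Qed.

Definition sadd (x y : sub) : sub := Sub (Radd (sP x) (sP y)).
Definition sopp (x : sub) : sub := Sub (Ropp (sP x)).
Definition szero : sub := Sub R0.
Definition sscale a (x : sub) : sub := Sub (Rscale a (sP x)).
Definition smul (x y : sub) : sub := Sub (Rmul (sP x) (sP y)).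
Definition sone : sub := Sub R1.

Lemma saddA : associative sadd.
Proof. by move=> f g h; apply: sub_ext => /=; rewrite addrA. Qed.
Lemma saddC : commutative sadd.
Proof. by move=> f g; apply: sub_ext => /=; rewrite addrC. Qed.
Lemma sadd0 : left_id szero sadd.
Proof. by move=> f; apply: sub_ext => /=; rewrite add0r. Qed.
Lemma saddN : left_inverse szero sopp sadd.
Proof. by move=> f; apply: sub_ext => /=; rewrite addNr. Qed.
HB.instance Definition _ := GRing.isZmodule.Build sub saddA saddC sadd0 saddN.
Lemma sscaleA a b v : sscale a (sscale b v) = sscale (a * b) v.
Proof. by apply: sub_ext => /=; rewrite scalerA. Qed.
Lemma sscale1 : left_id 1 sscale.
Proof. by move=> f; apply: sub_ext => /=; rewrite scale1r. Qed.
Lemma sscaleDr : right_distributive sscale +%R.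
Proof. by move=> a f g; apply: sub_ext => /=; rewrite scalerDr. Qed.
Lemma sscaleDl v : {morph sscale^~ v: a b / a + b}.
Proof. by move=> a b; apply: sub_ext => /=; rewrite scalerDl. Qed.
HB.instance Definition _ := GRing.Zmodule_isLmodule.Build K sub sscaleA sscale1 sscaleDr sscaleDl.
Lemma smulA : associative smul.
Proof. by move=> f g h; apply: sub_ext => /=; rewrite mulrA. Qed.
Lemma smul1 : left_id sone smul.
Proof. by move=> f; apply: sub_ext => /=; rewrite mul1r. Qed.
Lemma smulr1 : right_id sone smul.
Proof. by move=> f; apply: sub_ext => /=; rewrite mulr1. Qed.
Lemma smulDl : left_distributive smul +%R.
Proof. by move=> f g h; apply: sub_ext => /=; rewrite mulrDl. Qed.
Lemma smulDr : right_distributive smul +%R.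
Proof. by move=> f g h; apply: sub_ext => /=; rewrite mulrDr. Qed.
Lemma sone_neq0 : sone != 0.
Proof. apply/eqP => /(congr1 sv) /= /eqP; by rewrite oner_eq0. Qed.
HB.instance Definition _ := GRing.Zmodule_isNzRing.Build sub smulA smul1 smulr1 smulDl smulDr sone_neq0.
Lemma sscaleAl (a : K) (u v : sub) : a *: (u * v) = (a *: u) * v.
Proof. by apply: sub_ext => /=; rewrite scalerAl. Qed.
HB.instance Definition _ := GRing.Lmodule_isLalgebra.Build K sub sscaleAl.
Lemma sscaleAr (a : K) (u v : sub) : a *: (u * v) = u * (a *: v).
Proof. by apply: sub_ext => /=; rewrite scalerAr. Qed.
HB.instance Definition _ := GRing.Lalgebra_isAlgebra.Build K sub sscaleAr.
Lemma sv_lin : is_linear (sv : sub -> A). Proof. by []. Qed.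
Lemma sv_mul (x y : sub) : sv (x * y) = sv x * sv y. Proof. by []. Qed.
Lemma sv_one : sv (1 : sub) = 1. Proof. by []. Qed.
End SubAlg.

Lemma alg_hom_id (K : fieldType) (A : algType K) : alg_hom (fun x : A => x).
Proof. by split. Qed.

Lemma alg_hom_comp (K : fieldType) (A B C : algType K) (f : A -> B) (g : B -> C) :
  alg_hom f -> alg_hom g -> alg_hom (fun x => g (f x)).
Proof.
case=> fl fm f1 [gl gm g1]; split; last by rewrite f1 g1.
  by move=> a x y; rewrite fl gl.
by move=> x y; rewrite fm gm.
Qed.

Section TInd.
Variable K : fieldType.
Variable W : lmodType K.
Variable T : algType K.
Variable iT : W -> T.
Hypothesis HT : is_tensor_alg iT.

Lemma T_ind (Q : T -> Prop) :
  (forall a x y, Q x -> Q y -> Q (a *: x + y)) -> Q 1 ->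
  (forall w x, Q x -> Q (iT w * x)) -> forall x, Q x.
Proof.
move=> Qlin Q1 QW.
pose R x := forall z, Q z -> Q (x * z).
have R1 : R 1 by move=> z; rewrite mul1r.
have Rlin : forall a x y, R x -> R y -> R (a *: x + y).
  by move=> a x y Hx Hy z Qz; rewrite mulrDl -scalerAl; apply: Qlin; [apply: Hx|apply: Hy].
have Rmul : forall x y, R x -> R y -> R (x * y).
  by move=> x y Hx Hy z Qz; rewrite -mulrA; apply: Hx; apply: Hy.
have RW : forall w, R (iT w) by move=> w z Qz; apply: QW.
pose f w : subT R1 Rlin Rmul := Sub (RW w).
have fl : is_linear f.
  by move=> a x y; apply: sub_ext => /=; rewrite (proj1 HT).
have [[g [gh gf]] _] := (proj2 HT) _ f fl.
have hsv : alg_hom (fun x => sv (g x)).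
  by apply: alg_hom_comp gh _; split.
have E := (proj2 ((proj2 HT) _ iT (proj1 HT))) _ _ hsv (alg_hom_id T).
move=> x; have := sP (g x); rewrite (E _) => [Rx|w].
  by have := Rx 1 Q1; rewrite mulr1.
by rewrite gf.
Qed.
End TInd.

Section MLF.
Variable K : fieldType.
Variables (M Y : lmodType K).

Definition mlin (G : option nat * seq M -> Y) :=
  forall s pre suf (a : K) u w,
    G (s, pre ++ (a *: u + w) :: suf) = a *: G (s, pre ++ u :: suf) + G (s, pre ++ w :: suf).

Record mlf := ML { mg :> option nat * seq M -> Y ; mg_ml : mlin mg }.
Lemma mlf_ext (f g : mlf) : (forall x, f x = g x) -> f = g.
Proof.
case: f g => f fl [g gl] /= H.
have E : f = g by apply: functional_extensionality.
subst; f_equal; apply: proof_irrelevance.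
Qed.
HB.instance Definition _ := gen_eqMixin mlf.
HB.instance Definition _ := gen_choiceMixin mlf.

Lemma ml_add (f g : mlf) : mlin (fun x => f x + g x).
Proof. by move=> s pre suf a u w; rewrite !mg_ml scalerDr addrACA. Qed.
Lemma ml_opp (f : mlf) : mlin (fun x => - f x).
Proof. by move=> s pre suf a u w; rewrite mg_ml opprD scalerN. Qed.
Lemma ml_zero : mlin (fun _ => (0 : Y)).
Proof. by move=> *; rewrite scaler0 addr0. Qed.
Lemma ml_scale (b : K) (f : mlf) : mlin (fun x => b *: f x).
Proof. by move=> s pre suf a u w; rewrite mg_ml scalerDr !scalerA mulrC. Qed.
Definition madd f g := ML (ml_add f g).
Definition mopp f := ML (ml_opp f).
Definition mzero := ML ml_zero.
Definition mscale a f := ML (ml_scale a f).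
Lemma maddA : associative madd.
Proof. by move=> f g h; apply: mlf_ext => x /=; rewrite addrA. Qed.
Lemma maddC : commutative madd.
Proof. by move=> f g; apply: mlf_ext => x /=; rewrite addrC. Qed.
Lemma madd0 : left_id mzero madd.
Proof. by move=> f; apply: mlf_ext => x /=; rewrite add0r. Qed.
Lemma maddN : left_inverse mzero mopp madd.
Proof. by move=> f; apply: mlf_ext => x /=; rewrite addNr. Qed.
HB.instance Definition _ := GRing.isZmodule.Build mlf maddA maddC madd0 maddN.
Lemma mscaleA a b v : mscale a (mscale b v) = mscale (a * b) v.
Proof. by apply: mlf_ext => x /=; rewrite scalerA. Qed.
Lemma mscale1 : left_id 1 mscale.
Proof. by move=> f; apply: mlf_ext => x /=; rewrite scale1r. Qed.
Lemma mscaleDr : right_distributive mscale +%R.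
Proof. by move=> a f g; apply: mlf_ext => x /=; rewrite scalerDr. Qed.
Lemma mscaleDl v : {morph mscale^~ v: a b / a + b}.
Proof. by move=> a b; apply: mlf_ext => x /=; rewrite scalerDl. Qed.
HB.instance Definition _ := GRing.Zmodule_isLmodule.Build K mlf mscaleA mscale1 mscaleDr mscaleDl.
Lemma mg_add (f g : mlf) x : (f + g) x = f x + g x. Proof. by []. Qed.
Lemma mg_scale a (f : mlf) x : (a *: f) x = a *: f x. Proof. by []. Qed.
Lemma mg_zero x : (0 : mlf) x = 0. Proof. by []. Qed.
End MLF.

Section LinFacts.
Variable K : fieldType.
Variables (U W : lmodType K) (f : U -> W).
Hypothesis fl : is_linear f.
Lemma linD x y : f (x + y) = f x + f y.
Proof. by rewrite -[x in LHS]scale1r fl scale1r. Qed.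
Lemma lin0 : f 0 = 0.
Proof. by apply: (@addrI _ (f 0)); rewrite -linD !addr0. Qed.
Lemma linZ a x : f (a *: x) = a *: f x.
Proof. by rewrite -[a *: x]addr0 fl lin0 addr0. Qed.
Lemma linN x : f (- x) = - f x.
Proof. by rewrite -scaleN1r linZ scaleN1r. Qed.
Lemma linB x y : f (x - y) = f x - f y.
Proof. by rewrite linD linN. Qed.
End LinFacts.

Lemma lin_comp_gen (K : fieldType) (U W Z : lmodType K) (f : U -> W) (g : W -> Z) :
  is_linear f -> is_linear g -> is_linear (fun x => g (f x)).
Proof. by move=> fl gl a x y; rewrite fl gl. Qed.

Section Lists.
Local Open Scope nat_scope.
Variable X : Type.
Lemma split_cases k (pre suf : seq X) :
 (exists p s d, forall v, take k (pre ++ v :: suf) = p ++ v :: s /\ drop k (pre ++ v :: suf) = d) \/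
 (exists t p s, forall v, take k (pre ++ v :: suf) = t /\ drop k (pre ++ v :: suf) = p ++ v :: s).
Proof.
case: (ltnP (size pre) k) => H.
  left; exists pre, (take (k - size pre).-1 suf), (drop (k - size pre).-1 suf) => v.
  rewrite take_cat drop_cat ltnNge (ltnW H) /=.
  by case E: (k - size pre) => [|m]; [move: E => /eqP; rewrite subn_eq0 leqNgt H|].
right; exists (take k pre), (drop k pre), suf => v.
rewrite take_cat drop_cat; case: (ltnP k (size pre)) => H2 //.
have -> : k = size pre by apply/eqP; rewrite eqn_leq H H2.
by rewrite subnn take0 drop0 cats0 take_size drop_size.
Qed.

Lemma map_if_enum N (j : 'I_N) (v : X) (x : 'I_N -> X) :
  [seq (if k == j then v else x k) | k <- enum 'I_N] =
  [seq x k | k <- take j (enum 'I_N)] ++ v :: [seq x k | k <- drop j.+1 (enum 'I_N)].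
Proof.
have Hj : j < size (enum 'I_N) by rewrite size_enum_ord.
have Dj : drop j (enum 'I_N) = j :: drop j.+1 (enum 'I_N).
  by rewrite (drop_nth j Hj) nth_ord_enum.
have U := enum_uniq 'I_N.
rewrite -(cat_take_drop j (enum 'I_N)) cat_uniq Dj in U.
case/and3P: U => _ /hasPn Hn U2.
rewrite -{1}(cat_take_drop j (enum 'I_N)) map_cat Dj map_cons eqxx; congr (_ ++ _ :: _).
  apply/eq_in_map => k Hk; case: eqP => // E; subst k.
  by move: (Hn j (mem_head _ _)); rewrite Hk.
apply/eq_in_map => k Hk; case: eqP => // E; subst k.
by move: U2 => /= /andP []; rewrite Hk.
Qed.

Lemma map_nth_enum (x0 : X) N (zs : seq X) : N = size zs ->
  [seq nth x0 zs (nat_of_ord k) | k <- enum 'I_N] = zs.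
Proof.
move=> E; rewrite (map_comp (nth x0 zs) val) val_enum_ord E.
by rewrite -/(mkseq _ _) mkseq_nth.
Qed.

Lemma map_nth_enum_f (Y : Type) (f : X -> Y) (x0 : X) N (zs : seq X) : N = size zs ->
  [seq f (nth x0 zs (nat_of_ord k)) | k <- enum 'I_N] = map f zs.
Proof.
move=> E; rewrite -[RHS](congr1 (map f) (map_nth_enum x0 E)) -map_comp.
by apply: eq_map.
Qed.
End Lists.

Section MagMF.
Variable K : fieldType.
Variable B : magAlg K.

Definition comb (l : seq B) : B := foldr (fun u acc => mag_mul u acc) (mag_one B) l.

Lemma comb_ml pre suf (a : K) (u w : B) :
  comb (pre ++ (a *: u + w) :: suf) = a *: comb (pre ++ u :: suf) + comb (pre ++ w :: suf).
Proof.
elim: pre => [|b pre IH] /=; first by rewrite mag_mulDl.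
by rewrite IH mag_mulDr.
Qed.

Definition mfB (n : nat) (j : 'I_n.+1) (b : 'I_n.+3 -> B) : B :=
  mag_mul (comb (take j.+2 [seq b k | k <- enum 'I_n.+3]))
          (comb (drop j.+2 [seq b k | k <- enum 'I_n.+3])).

Lemma mfB_ml n (j : 'I_n.+1) : multilinear (@mfB n j).
Proof.
move=> i x a u w; rewrite /mfB !map_if_enum.
set pre := [seq x k | k <- _]; set suf := [seq x k | k <- _].
case: (split_cases j.+2 pre suf) => [[p [s [d H]]]|[t [p [s H]]]];
  rewrite !(proj1 (H _)) !(proj2 (H _)).
  by rewrite comb_ml mag_mulDl.
by rewrite comb_ml mag_mulDr.
Qed.

Definition MFB : magFineAlg K := MagFineAlg mfB_ml.
End MagMF.

Lemma comb5 (K : fieldType) (V : lmodType K) (a : K) (p1 p2 p3 p4 p5 q1 q2 q3 q4 q5 : V) :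
  a *: (p1 + p2 - p3 + p4 + p5) + (q1 + q2 - q3 + q4 + q5) =
  (a *: p1 + q1) + (a *: p2 + q2) - (a *: p3 + q3) + (a *: p4 + q4) + (a *: p5 + q5).
Proof.
rewrite !scalerDr scalerN opprD.
rewrite [LHS]addrACA [X in X + _ = _]addrACA [X in X + _ + _ = _]addrACA.
by rewrite [X in X + _ + _ + _ = _]addrACA.
Qed.

Section TM.
Variable K : fieldType.
Variable M : magFineAlg K.
Variable T : algType K.
Variable iT : M -> T.
Hypothesis HT : is_tensor_alg iT.

Let iTl : is_linear iT := proj1 HT.

Definition word (l : seq M) : T := foldr (fun a x => iT a * x) 1 l.

Lemma word_rcons l w : word (rcons l w) = word l * iT w.
Proof. by elim: l => [|a l IH] /=; rewrite ?mul1r ?mulr1 // IH mulrA. Qed.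

Lemma span_ind (Q : T -> Prop) :
  (forall a x y, Q x -> Q y -> Q (a *: x + y)) -> (forall l, Q (word l)) -> forall x, Q x.
Proof.
move=> Qlin Qw.
pose Q' x := forall l, Q (word l * x).
have : forall x, Q' x.
  apply: (T_ind HT).
  - by move=> a x y Hx Hy l; rewrite mulrDr -scalerAr; apply: Qlin.
  - by move=> l; rewrite mulr1.
  - by move=> w x Hx l; rewrite mulrA -word_rcons.
by move=> H x; have := H x [::]; rewrite mul1r.
Qed.

Local Notation MLT := (mlf M T).

Definition mfop (zs : seq M) (q : nat) : M :=
  @mf_op _ M (size zs - 3) (inord (q - 2)) (fun k => nth 0 zs k).

Lemma mfop_ml q pre suf (a : K) (u w : M) :
  (3 <= size pre + (size suf).+1)%N ->
  mfop (pre ++ (a *: u + w) :: suf) q = a *: mfop (pre ++ u :: suf) q + mfop (pre ++ w :: suf) q.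
Proof.
move=> H3; rewrite /mfop !size_cat /=.
set n := (_ - 3)%N.
have Hn : n.+3 = (size pre + (size suf).+1)%N by rewrite /n -addn3 subnK.
have Hp : (size pre < n.+3)%N by rewrite Hn addnS ltnS leq_addr.
pose jj : 'I_n.+3 := Ordinal Hp.
have E v : (fun k : 'I_n.+3 => nth 0 (pre ++ v :: suf) k) =
           (fun k => if k == jj then v else nth 0 (pre ++ 0 :: suf) k).
  apply: functional_extensionality => k.
  rewrite !nth_cat; case: (ltngtP k (size pre)) => Hk.
  - by case: eqP => // E; rewrite E /= ltnn in Hk.
  - case: eqP => [E|_]; first by rewrite E /= ltnn in Hk.
    by rewrite -[(k - size pre)%N]prednK ?subn_gt0.
  - have -> : k == jj by apply/eqP/val_inj.
    by rewrite Hk subnn.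
by rewrite !E mf_op_multilinear.
Qed.

Definition Gc_f (p : option nat * seq M) : T := if p.2 is [::] then 1 else 0.
Lemma Gc_ml : mlin Gc_f.
Proof. by move=> s pre suf a u w; rewrite /Gc_f /=; case: pre => *; rewrite scaler0 addr0. Qed.
Definition Gc : MLT := ML Gc_ml.

Definition G1_f (p : option nat * seq M) : T := if p.2 is [:: a] then iT a else 0.
Lemma G1_ml : mlin G1_f.
Proof.
move=> s pre suf a u w; rewrite /G1_f /=.
case: pre => [|b [|c pre]] /=; last by rewrite scaler0 addr0.
  by case: suf => [|? ?]; rewrite ?iTl // scaler0 addr0.
by rewrite scaler0 addr0.
Qed.
Definition G1 : MLT := ML G1_ml.

Definition G0_f (p : option nat * seq M) : T :=
  if p.1 is Some q then
    if (1 < q)%N && (q < size p.2)%N then iT (mfop p.2 q) else 0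
  else 0.
Lemma G0_ml : mlin G0_f.
Proof.
move=> [q|] pre suf a u w; rewrite /G0_f /=; last by rewrite scaler0 addr0.
rewrite !size_cat /=.
case: ifP => [/andP [H1 H2]|]; last by rewrite scaler0 addr0.
rewrite mfop_ml ?iTl //.
by apply: (leq_trans _ H2); rewrite ltnS.
Qed.
Definition G0 : MLT := ML G0_ml.

Lemma Gc_neq0 : Gc != 0.
Proof.
apply/eqP => /(congr1 (fun G : MLT => G (None, [::]))) /= /eqP.
by rewrite /Gc_f /= oner_eq0.
Qed.

Local Notation EA := (endoR Gc_neq0).

Definition rho_f (a : M) (G : MLT) : MLT.
Proof.
refine (@ML _ _ _ (fun p => G (p.1, rcons p.2 a)) _).
by move=> s pre suf b u w /=; rewrite !rcons_cat !rcons_cons mg_ml.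
Defined.

Lemma rho_lin a : is_linear (rho_f a).
Proof. by move=> b F G; apply: mlf_ext. Qed.

Definition rho (a : M) : EA := Endo (rho_lin a).

Lemma rho_lin2 : is_linear rho.
Proof.
move=> b x y; apply: endo_ext => G; apply: mlf_ext => [[s zs]] /=.
by rewrite -!cats1 mg_ml.
Qed.

Definition Phi_sig := cid (proj1 ((proj2 HT) EA rho rho_lin2)).
Definition Phi : T -> EA := proj1_sig Phi_sig.
Lemma Phi_hom : alg_hom Phi. Proof. exact: (proj1 (proj2_sig Phi_sig)). Qed.
Lemma Phi_iT a : Phi (iT a) = rho a. Proof. exact: (proj2 (proj2_sig Phi_sig)). Qed.

Definition Mark_f (G : MLT) : MLT.
Proof.
refine (@ML _ _ _ (fun p => G (Some (size p.2), p.2)) _).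
by move=> s pre suf b u w /=; rewrite !size_cat /= mg_ml.
Defined.
Lemma Mark_lin : is_linear Mark_f.
Proof. by move=> b F G; apply: mlf_ext. Qed.
Definition Mark : endo MLT := Endo Mark_lin.

Definition Ev (G : MLT) : T := G (None, [::]).

Definition C x := Ev (Phi x Gc).
Definition X1 x := Ev (Phi x G1).
Definition Op x y := Ev (Phi x (Mark (Phi y G0))).
Definition Pp x := locked (x - C x).

Lemma Phi_word l (G : MLT) s zs : Phi (word l) G (s, zs) = G (s, zs ++ l).
Proof.
elim: l G s zs => [|a l IH] G s zs /=.
  by case: Phi_hom => _ _ ->; rewrite cats0.
case: Phi_hom => _ -> _; rewrite Phi_iT ef_mul /= IH.
by rewrite cat_rcons.
Qed.

Lemma Phi_lin : is_linear Phi. Proof. by case: Phi_hom. Qed.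

Lemma C_lin : is_linear C.
Proof. by move=> a x y; rewrite /C /Ev Phi_lin. Qed.
Lemma X1_lin : is_linear X1.
Proof. by move=> a x y; rewrite /X1 /Ev Phi_lin. Qed.
Lemma Op_lin1 z : is_linear (fun x => Op x z).
Proof. by move=> a x y; rewrite /Op /Ev Phi_lin. Qed.
Lemma Op_lin2 z : is_linear (Op z).
Proof. by move=> a x y; rewrite /Op /Ev Phi_lin ef_add ef_scale !ef_lin. Qed.
Lemma Pp_lin : is_linear Pp.
Proof. by move=> a x y; rewrite /Pp -!lock C_lin scalerBr opprD addrACA. Qed.

Definition mulT (x y : T) : T :=
  C x * y + x * C y - C x * C y + X1 x * Pp y + Op (Pp x) (Pp y).

Lemma mulT_Dl (a : K) (x y z : T) : mulT (a *: x + y) z = a *: mulT x z + mulT y z.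
Proof.
rewrite /mulT C_lin X1_lin Pp_lin Op_lin1 comb5 !mulrDl -!scalerAl.
reflexivity.
Qed.

Lemma mulT_Dr (a : K) (x y z : T) : mulT z (a *: x + y) = a *: mulT z x + mulT z y.
Proof.
rewrite /mulT C_lin Pp_lin Op_lin2 comb5 !mulrDr -!scalerAr.
reflexivity.
Qed.

Lemma C1 : C 1 = 1.
Proof. by rewrite /C /Ev; case: Phi_hom => _ _ ->. Qed.
Lemma X11 : X1 1 = 0.
Proof. by rewrite /X1 /Ev; case: Phi_hom => _ _ ->. Qed.
Lemma Op0l y : Op 0 y = 0.
Proof. by rewrite /Op /Ev (lin0 Phi_lin). Qed.
Lemma Op0r x : Op x 0 = 0.
Proof. by rewrite /Op /Ev (lin0 Phi_lin) ef_zero !ef_0. Qed.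

Lemma mulT1l x : mulT 1 x = x.
Proof. by rewrite /mulT C1 X11 /Pp -!lock C1 subrr Op0l !mul1r addrK mul0r !addr0. Qed.
Lemma mulT1r x : mulT x 1 = x.
Proof. by rewrite /mulT /Pp -!lock C1 subrr Op0r !mulr1 mulr0 !addr0 addrC addKr. Qed.

Definition TM : magAlg K := MagAlg mulT_Dl mulT_Dr mulT1l mulT1r.

Lemma C_word l : C (word l) = if l is [::] then 1 else 0.
Proof. by rewrite /C /Ev Phi_word /= /Gc_f; case: l. Qed.
Lemma X1_word l : X1 (word l) = G1_f (None, l).
Proof. by rewrite /X1 /Ev Phi_word. Qed.
Lemma Op_word l l' : Op (word l) (word l') = G0_f (Some (size l), l ++ l').
Proof. by rewrite /Op /Ev Phi_word /= Phi_word. Qed.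

Definition wprod (l l' : seq M) : T :=
  if l is [::] then word l' else if l' is [::] then word l
  else if size l == 1%N then word (l ++ l') else iT (mfop (l ++ l') (size l)).

Lemma mul_word l l' : mulT (word l) (word l') = wprod l l'.
Proof.
case: l => [|a l1]; first by rewrite mulT1l.
case: l' => [|b l2]; first by rewrite mulT1r.
rewrite /mulT /Pp -!lock !C_word !subr0 X1_word Op_word !mul0r !mulr0 !subr0 !add0r /= /G1_f /G0_f /=.
case: l1 => [|c l3] /=; first by rewrite addr0.
by rewrite mul0r add0r size_cat /= addnS ltnS leq_addr.
Qed.

Lemma word_cons a l : word (a :: l) = mulT (iT a) (word l).
Proof.
have -> : iT a = word [:: a] by rewrite /= mulr1.
by rewrite mul_word /=; case: l.
Qed.

End TM.

Section Free.
Variable K : fieldType.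
Variable V : lmodType K.
Variable M : magFineAlg K.
Variable iF : V -> M.
Hypothesis HF : is_free_magfine iF.
Variable T : algType K.
Variable iT : M -> T.
Hypothesis HT : is_tensor_alg iT.

Local Notation TM := (TM HT).
Local Notation word := (word iT).
Local Notation mulT := (mulT HT).

Lemma mag_hom_lin (A B : magAlg K) (h : A -> B) : mag_hom h -> is_linear h.
Proof. by case. Qed.

Lemma TM_hom_word (B : magAlg K) (h : TM -> B) : mag_hom h ->
  forall l, h (word l) = comb (map (fun a => h (iT a)) l).
Proof.
case=> hl hm h1; elim=> [|a l IH]; first exact: h1.
by rewrite (word_cons HT) hm IH.
Qed.

Lemma mfop_eq n (j : 'I_n.+1) (xs : 'I_n.+3 -> M) :
  mfop [seq xs k | k <- enum 'I_n.+3] j.+2 = mf_op j xs.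
Proof.
rewrite /mfop.
have Hs : (size [seq xs k | k <- enum 'I_n.+3] - 3)%N = n by rewrite size_map size_enum_ord; lia.
move: (size [seq xs k | k <- enum 'I_n.+3] - 3)%N Hs => m Hm; subst m.
have -> : (inord (j.+2 - 2) : 'I_n.+1) = j by apply/val_inj; rewrite /= subn2 /= inordK.
congr (mf_op _ _); apply: functional_extensionality => k.
by rewrite (nth_map k) ?size_enum_ord // nth_ord_enum.
Qed.

Lemma iT_mfop n (j : 'I_n.+1) (xs : 'I_n.+3 -> M) :
  iT (mf_op j xs) = mulT (word (take j.+2 [seq xs k | k <- enum 'I_n.+3]))
                         (word (drop j.+2 [seq xs k | k <- enum 'I_n.+3])).
Proof.
rewrite (mul_word HT) /wprod.
set zs := [seq xs k | k <- enum 'I_n.+3].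
have Sz : size zs = n.+3 by rewrite size_map size_enum_ord.
have Hj := ltn_ord j.
have St : size (take j.+2 zs) = j.+2 by rewrite size_take Sz; case: ifP => //; lia.
have Sd : size (drop j.+2 zs) = (n.+1 - j)%N by rewrite size_drop Sz; lia.
case E1 : (take j.+2 zs) St => [|a l] //= St'.
case E2 : (drop j.+2 zs) Sd => [|b l'] /=; first by lia.
move=> _; rewrite St' /=.
have -> : a :: l ++ b :: l' = zs by rewrite -(cat_take_drop j.+2 zs) E1 E2.
by rewrite mfop_eq.
Qed.

Lemma h_iT_mfhom (B : magAlg K) (h : TM -> B) : mag_hom h ->
  mf_hom (B := MFB B) (fun a : M => h (iT a)).
Proof.
move=> hh; have [hl hm h1] := hh; split.
  by move=> a x y; rewrite (proj1 HT) hl.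
move=> n j xs; rewrite iT_mfop hm !(TM_hom_word hh) /= /mfB.
by rewrite map_take map_drop -!map_comp.
Qed.

Lemma TM_unique (B : magAlg K) (h h' : TM -> B) : mag_hom h -> mag_hom h' ->
  (forall v, h (iT (iF v)) = h' (iT (iF v))) -> forall x, h x = h' x.
Proof.
move=> hh hh' E.
have fl : is_linear (fun v => h (iT (iF v))).
  by move=> a x y; rewrite (proj1 HF) (proj1 HT) (mag_hom_lin hh).
have E2 := (proj2 ((proj2 HF) (MFB B) _ fl)) _ _ (h_iT_mfhom hh) (h_iT_mfhom hh') E.
apply: (span_ind HT).
  by move=> a x y Hx Hy; rewrite !(mag_hom_lin hh) !(mag_hom_lin hh') Hx Hy.
by move=> l; rewrite !(TM_hom_word hh) !(TM_hom_word hh'); congr comb; apply: eq_map => a; exact: E2.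
Qed.

Lemma TM_exists (B : magAlg K) (f : V -> B) : is_linear f ->
  exists g : TM -> B, mag_hom g /\ forall v, g (iT (iF v)) = f v.
Proof.
move=> fl.
have [[g1 [g1h g1f]] _] := (proj2 HF) (MFB B) f fl.
pose X : lmodType K := (mag_car B * K^o)%type.
pose rb a : X -> X := fun p => (mag_mul (g1 a) p.1, 0).
have rbl a : is_linear (rb a).
  move=> c p q; rewrite /rb /= mag_mulDr; congr pair.
  by simpl; rewrite scaler0 addr0.
have w0 : ((mag_one B, 1) : X) != 0.
  by apply/eqP => /(congr1 snd) /eqP; rewrite /= oner_eq0.
pose rho' a : endoR w0 := Endo (rbl a).
have rl : is_linear rho'.
  move=> c a b; apply: endo_ext => p; rewrite /= /rb /= (proj1 g1h) mag_mulDl.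
  by congr pair; simpl; rewrite scaler0 addr0.
have [[PB [[PBl PBm PB1] PBi]] _] := (proj2 HT) (endoR w0) rho' rl.
pose psi x := (PB x ((mag_one B, 1) : X)).1.
have psil : is_linear psi.
  by move=> c x y; rewrite /psi PBl.
have psi_word l : psi (word l) = comb (map g1 l).
  elim: l => [|a l IH]; first by rewrite /psi PB1.
  by rewrite /psi /= PBm PBi ef_mul /= -IH.
exists psi; split; last first.
  by move=> v; rewrite (_ : iT (iF v) = word [:: iF v]) ?psi_word /= ?mag_mul1r ?g1f // mulr1.
split => //; last by rewrite /psi PB1.
apply: (span_ind HT) => [c x x' Hx Hx' y|l].
  by rewrite mag_mulDl !psil Hx Hx' mag_mulDl.
apply: (span_ind HT) => [c y y' Hy Hy'|l'].
  by rewrite mag_mulDr !psil Hy Hy' mag_mulDr.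
change (psi (mulT (word l) (word l')) = mag_mul (psi (word l)) (psi (word l'))).
rewrite (mul_word HT).
case: l => [|a l]; first by rewrite /wprod !psi_word /= mag_mul1l.
case: l' => [|b l']; first by rewrite /wprod !psi_word /= mag_mul1r.
case: l => [|c l].
  have -> : wprod iT [:: a] (b :: l') = word (a :: b :: l') by [].
  by rewrite !psi_word /= mag_mul1r.
have -> : wprod iT (a :: c :: l) (b :: l') = iT (mfop (a :: c :: l ++ b :: l') (size l).+2) by [].
rewrite (_ : iT (mfop _ _) = word [:: mfop (a :: c :: l ++ b :: l') (size l).+2]); last first.
  by rewrite /= mulr1.
rewrite !psi_word /= mag_mul1r.
set zs := a :: c :: l ++ b :: l'.
rewrite /mfop (proj2 g1h) /= /mfB.
have Sz : size zs = ((size l) + (size l').+1).+2 by rewrite /zs /= size_cat.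
rewrite (map_nth_enum_f _ _ (_ : (size zs - 3).+3 = size zs)); last by move: Sz; rewrite /zs /=; lia.
rewrite inordK; last by move: Sz; rewrite /zs /=; lia.
have -> : ((size l).+2 - 2).+2 = size (a :: c :: l) by rewrite /= subn2.
have Ez : zs = (a :: c :: l) ++ (b :: l') by [].
by rewrite Ez map_cat take_size_cat ?size_map // drop_size_cat ?size_map.
Qed.

End Free.

Lemma mag_hom_id (K : fieldType) (A : magAlg K) : mag_hom (fun x : A => x).
Proof. by split. Qed.

Lemma mag_hom_comp (K : fieldType) (A B C : magAlg K) (f : A -> B) (g : B -> C) :
  mag_hom f -> mag_hom g -> mag_hom (fun x => g (f x)).
Proof.
case=> fl fm f1 [gl gm g1]; split; last by rewrite f1 g1.
  by move=> a x y; rewrite fl gl.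
by move=> x y; rewrite fm gm.
Qed.

Section Nat.
Variable K : fieldType.
Variables (M M' : magFineAlg K) (T T' : algType K) (iT : M -> T) (iT' : M' -> T').
Hypotheses (HT : is_tensor_alg iT) (HT' : is_tensor_alg iT').
Variable h : M -> M'.
Hypothesis hh : mf_hom h.
Variable k : T -> T'.
Hypothesis kh : alg_hom k.
Hypothesis kiT : forall w, k (iT w) = iT' (h w).

Lemma h0 : h 0 = 0. Proof. exact: (lin0 (proj1 hh)). Qed.

Lemma nth_map0 (zs : seq M) i : nth 0 (map h zs) i = h (nth 0 zs i).
Proof.
case: (ltnP i (size zs)) => Hi; first by rewrite (nth_map 0).
by rewrite !nth_default ?size_map // h0.
Qed.

Lemma h_mfop zs q : h (mfop zs q) = mfop (map h zs) q.
Proof.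
rewrite /mfop (proj2 hh) size_map.
congr (mf_op _ _); apply: functional_extensionality => i.
by rewrite nth_map0.
Qed.

Lemma k_word l : k (word iT l) = word iT' (map h l).
Proof.
case: kh => kl km k1.
elim: l => [|a l IH] /=; first exact: k1.
by rewrite km kiT IH.
Qed.

Lemma k_maghom : mag_hom (A := TM HT) (B := TM HT') k.
Proof.
have [kl km k1] := kh.
split => //.
apply: (span_ind HT) => [c x x' Hx Hx' y|l].
  by rewrite mag_mulDl !kl Hx Hx' mag_mulDl.
apply: (span_ind HT) => [c y y' Hy Hy'|l'].
  by rewrite mag_mulDr !kl Hy Hy' mag_mulDr.
change (k (mulT HT (word iT l) (word iT l')) = mulT HT' (k (word iT l)) (k (word iT l'))).
rewrite !k_word !(mul_word).
have E1 : forall (MM : magFineAlg K) (TT : algType K) (ii : MM -> TT) (x y : MM) (p q : seq MM),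
  wprod ii (x :: p) (y :: q) = if size (x :: p) == 1%N then word ii ((x :: p) ++ (y :: q))
    else ii (mfop ((x :: p) ++ (y :: q)) (size (x :: p))) by [].
case: l => [|a l]; first exact: k_word.
case: l' => [|b l']; first exact: k_word.
rewrite !map_cons !E1 -!map_cons size_map; case: ifP => _.
  by rewrite k_word map_cat.
by rewrite kiT h_mfop map_cat.
Qed.
End Nat.

Theorem corollary3p5 (K : fieldType)
  (Mag : forall V : lmodType K, magAlg K)
  (iM : forall V : lmodType K, V -> Mag V)
  (HM : forall V : lmodType K, is_free_mag (iM V))
  (MF : forall V : lmodType K, magFineAlg K)
  (iF : forall V : lmodType K, V -> MF V)
  (HF : forall V : lmodType K, is_free_magfine (iF V))
  (TA : forall W : lmodType K, algType K)
  (iT : forall W : lmodType K, W -> TA W)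
  (HT : forall W : lmodType K, is_tensor_alg (iT W)) :
  exists phi : forall V : lmodType K, Mag V -> TA (MF V),
    (forall V : lmodType K, is_linear (phi V) /\ bijective (phi V)) /\
    (forall (V V' : lmodType K) (f : V -> V'), is_linear f ->
     forall (g : Mag V -> Mag V') (h : MF V -> MF V')
            (k : TA (MF V) -> TA (MF V')),
       mag_hom g -> (forall v, g (iM V v) = iM V' (f v)) ->
       mf_hom h -> (forall v, h (iF V v) = iF V' (f v)) ->
       alg_hom k -> (forall w, k (iT (MF V) w) = iT (MF V') (h w)) ->
       forall x, phi V' (g x) = k (phi V x)).
Proof.
have iotal : forall V, is_linear (fun v => iT (MF V) (iF V v)).
  by move=> V a x y; rewrite (proj1 (HF V)) (proj1 (HT _)).
pose P V := cid (proj1 ((proj2 (HM V)) (TM (HT (MF V))) _ (iotal V))).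
exists (fun V => proj1_sig (P V)).
have Ph V : mag_hom (proj1_sig (P V)) by exact: (proj1 (proj2_sig (P V))).
have Pi V v : proj1_sig (P V) (iM V v) = iT (MF V) (iF V v) by exact: (proj2 (proj2_sig (P V)) v).
split.
  move=> V; split; first by case: (Ph V).
  have [psi [psih psii]] := TM_exists (HF V) (HT (MF V)) (proj1 (HM V)).
  exists psi.
    move=> x.
    apply: ((proj2 ((proj2 (HM V)) (Mag V) _ (proj1 (HM V)))) (fun x => psi (proj1_sig (P V) x)) (fun x => x)).
    - exact: mag_hom_comp (Ph V) psih.
    - exact: mag_hom_id.
    - by move=> v; rewrite Pi psii.
  move=> x.
  apply: (@TM_unique _ _ _ _ (HF V) _ _ (HT (MF V)) (TM (HT (MF V))) (fun x => proj1_sig (P V) (psi x)) (fun x => x)).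
  - exact: mag_hom_comp psih (Ph V).
  - exact: mag_hom_id.
  - by move=> v; rewrite psii Pi.
move=> V V' f fl g h k gh gi hh hi kh ki x.
apply: ((proj2 ((proj2 (HM V)) (TM (HT (MF V'))) _ (lin_comp_gen fl (iotal V')))) (fun x => proj1_sig (P V') (g x)) (fun x => k (proj1_sig (P V) x))).
- exact: mag_hom_comp gh (Ph V').
- exact: mag_hom_comp (Ph V) (k_maghom (HT (MF V)) (HT (MF V')) hh kh ki).
- by move=> v; rewrite gi !Pi ki hi.
Qed.
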